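(* Let $T:V\to\mathfrak g$ be a relative Rota–Baxter operator on a Lie triple system $(\mathfrak g,[\cdot,\cdot,\cdot])$ with respect to a representation $(V;\rho)$. Then $$[u,v,w]_T=D(Tu,Tv)w+\rho(Tv,Tw)u-\rho(Tu,Tw)v\qquad(u,v,w\in V)$$ defines a Lie triple system structure on $V$, and $$\varrho(u,v)x=[x,Tu,Tv]-T\big(D(x,Tu)v-\rho(x,Tv)u\big)\qquad(x\in\mathfrak g,\ u,v\in V)$$ defines a representation $\varrho:\otimes^2V\to\mathfrak{gl}(\mathfrak g)$ of $(V,[\cdot,\cdot,\cdot]_T)$ on $\mathfrak g$.
   Context: All vector spaces are over a field of characteristic $0$. A Lie triple system is a vector space with a trilinear bracket satisfying $[x,x,y]=0$, $[x,y,z]+[y,z,x]+[z,x,y]=0$ and $[x,y,[z,w,t]]=[[x,y,z],w,t]+[z,[x,y,w],t]+[z,w,[x,y,t]]$. A representation of a Lie triple system $\mathfrak h$ on $W$ is a bilinear $\rho:\otimes^2\mathfrak h\to\mathfrak{gl}(W)$ with $D(a,b):=\rho(b,a)-\rho(a,b)$ such that $\rho(c,d)\rho(a,b)-\rho(b,d)\rho(a,c)-\rho(a,[b,c,d])+D(b,c)\rho(a,d)=0$ and $\rho([a,b,c],d)+\rho(c,[a,b,d])=[D(a,b),\rho(c,d)]$ for all $a,b,c,d\in\mathfrak h$. A relative Rota–Baxter operator on $\mathfrak g$ with respect to $(V;\rho)$ is a linear $T:V\to\mathfrak g$ with $[Tu,Tv,Tw]=T(D(Tu,Tv)w+\rho(Tv,Tw)u-\rho(Tu,Tw)v)$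 for all $u,v,w\in V$. *)

(* Defs.v *)
From HB Require Import structures.
From mathcomp Require Import all_boot all_order all_algebra.
Set Implicit Arguments. Unset Strict Implicit. Unset Printing Implicit Defensive.
Import GRing.Theory.
Local Open Scope ring_scope.

Definition lin (K : fieldType) (U W : lmodType K) (f : U -> W) : Prop :=
  forall (a : K) (x y : U), f (a *: x + y) = a *: f x + f y.

Definition trilinear (K : fieldType) (U W : lmodType K) (br : U -> U -> U -> W) : Prop :=
  (forall y z, lin (fun x => br x y z)) /\
  (forall x z, lin (fun y => br x y z)) /\
  (forall x y, lin (fun z => br x y z)).

Definition LieTripleSystem (K : fieldType) (g : lmodType K) (br : g -> g -> g -> g) : Prop :=
  trilinear br /\
  (forall x y, br x x y = 0) /\
  (forall x y z, br x y z + br y z x + br z x y = 0) /\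
  (forall x y z w t,
      br x y (br z w t) = br (br x y z) w t + br z (br x y w) t + br z w (br x y t)).

Definition Dop (K : fieldType) (h W : lmodType K) (rho : h -> h -> W -> W) (a b : h) : W -> W :=
  fun w => rho b a w - rho a b w.

Definition LTSrep (K : fieldType) (h W : lmodType K) (br : h -> h -> h -> h)
    (rho : h -> h -> W -> W) : Prop :=
  (forall a b, lin (rho a b)) /\
  (forall b w, lin (fun a => rho a b w)) /\
  (forall a w, lin (fun b => rho a b w)) /\
  (forall a b c d w,
      rho c d (rho a b w) - rho b d (rho a c w) - rho a (br b c d) w
      + Dop rho b c (rho a d w) = 0) /\
  (forall a b c d w,
      rho (br a b c) d w + rho c (br a b d) w
      = Dop rho a b (rho c d w) - rho c d (Dop rho a b w)).

Definition relRB (K : fieldType) (g V : lmodType K) (br : g -> g -> g -> g)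
    (rho : g -> g -> V -> V) (T : V -> g) : Prop :=
  lin T /\
  forall u v w, br (T u) (T v) (T w)
                = T (Dop rho (T u) (T v) w + rho (T v) (T w) u - rho (T u) (T w) v).

Definition bracketT (K : fieldType) (g V : lmodType K)
    (rho : g -> g -> V -> V) (T : V -> g) (u v w : V) : V :=
  Dop rho (T u) (T v) w + rho (T v) (T w) u - rho (T u) (T w) v.

Definition varrhoT (K : fieldType) (g V : lmodType K) (br : g -> g -> g -> g)
    (rho : g -> g -> V -> V) (T : V -> g) (u v : V) (x : g) : g :=
  br x (T u) (T v) - T (Dop rho x (T u) v - rho x (T v) u).

(* Main.v *)
Require Import Defs.
From mathcomp Require Import all_boot all_order all_algebra.
Set Implicit Arguments. Unset Strict Implicit. Unset Printing Implicit Defensive.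
Import GRing.Theory.
Local Open Scope ring_scope.

Inductive zexpr := ZAt of nat | ZZero | ZAdd of zexpr & zexpr | ZOpp of zexpr | ZMulz of zexpr & int.

Fixpoint zeval (M : zmodType) (env : seq M) (e : zexpr) : M :=
  match e with
  | ZAt i => nth 0 env i
  | ZZero => 0
  | ZAdd a b => zeval env a + zeval env b
  | ZOpp a => - zeval env a
  | ZMulz a k => zeval env a *~ k
  end.

Fixpoint zaddl (c d : seq int) : seq int :=
  match c, d with
  | [::], _ => d
  | _, [::] => c
  | x :: c', y :: d' => (x + y) :: zaddl c' d'
  end.

Fixpoint zevall (M : zmodType) (env : seq M) (c : seq int) : M :=
  match c with
  | [::] => 0
  | x :: c' => (head 0 env) *~ x + zevall (behead env) c'
  end.

Fixpoint znorm (e : zexpr) : seq int :=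
  match e with
  | ZAt i => ncons i 0 [:: 1]
  | ZZero => [::]
  | ZAdd a b => zaddl (znorm a) (znorm b)
  | ZOpp a => map (fun x => - x) (znorm a)
  | ZMulz a k => map (fun x => x * k) (znorm a)
  end.

Lemma zevall_add (M : zmodType) (c d : seq int) (env : seq M) :
  zevall env (zaddl c d) = zevall env c + zevall env d.
Proof.
elim: c d env => [|x c IH] [|y d] env /=; rewrite ?add0r ?addr0 //.
by rewrite IH mulrzDr addrACA.
Qed.

Lemma zevall_opp (M : zmodType) (c : seq int) (env : seq M) :
  zevall env (map (fun x => - x) c) = - zevall env c.
Proof.
elim: c env => [|x c IH] env /=; first by rewrite oppr0.
by rewrite IH mulrNz opprD.
Qed.

Lemma zevall_mul (M : zmodType) (c : seq int) (k : int) (env : seq M) :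
  zevall env (map (fun x => x * k) c) = zevall env c *~ k.
Proof.
elim: c env => [|x c IH] env /=; first by rewrite mul0rz.
by rewrite IH mulrzDl mulrzA.
Qed.

Lemma zevall_single (M : zmodType) (i : nat) (env : seq M) :
  zevall env (ncons i 0 [:: 1]) = nth 0 env i.
Proof.
elim: i env => [|i IH] [|a env] /=; rewrite ?mulr0z ?add0r ?addr0 //.
- by rewrite IH; case: i {IH}.
Qed.

Lemma znorm_sound (M : zmodType) (env : seq M) e : zeval env e = zevall env (znorm e).
Proof.
elim: e => [i||a IHa b IHb|a IHa|a IHa k] /=.
- by rewrite zevall_single.
- by [].
- by rewrite zevall_add IHa IHb.
- by rewrite zevall_opp IHa.
- by rewrite zevall_mul IHa.
Qed.

Lemma zevall_zero (M : zmodType) (c : seq int) (env : seq M) :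
  all (fun x => x == 0) c -> zevall env c = 0.
Proof.
elim: c env => [|x c IH] env //= /andP[/eqP -> /IH ->]; by rewrite mulr0z add0r.
Qed.

Lemma zsolve (M : zmodType) (env : seq M) e1 e2 :
  all (fun x => x == 0) (znorm (ZAdd e1 (ZOpp e2))) -> zeval env e1 = zeval env e2.
Proof.
move=> H; apply/eqP; rewrite -subr_eq0.
by have := zevall_zero env H; rewrite -znorm_sound /= => ->.
Qed.

Lemma zcomb (M : zmodType) (k : int) (l r x y : M) :
  l = r -> x - y - (l - r) *~ k = 0 -> x = y.
Proof. by move=> -> /eqP; rewrite subrr mul0rz subr0 subr_eq0 => /eqP. Qed.

Ltac zlookup x env :=
  lazymatch env with
  | (x :: _)%SEQ => constr:(0%N)
  | (?y :: ?r)%SEQ =>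
      match constr:(tt) with
      | _ => let _ := constr:(@erefl _ x : x = y) in constr:(0%N)
      | _ => let n := zlookup x r in constr:(S n)
      end
  end.

Ltac zappend env x :=
  lazymatch env with
  | nil => constr:(x :: nil)
  | (?y :: ?r)%SEQ => let r' := zappend r x in constr:(y :: r')
  end.

Ltac zreify t env :=
  lazymatch t with
  | (?a + ?b)%R =>
      let p := zreify a env in
      lazymatch p with (?ea, ?env1) =>
        let q := zreify b env1 in
        lazymatch q with (?eb, ?env2) => constr:((ZAdd ea eb, env2)) end end
  | (- ?a)%R =>
      let p := zreify a env in
      lazymatch p with (?ea, ?env1) => constr:((ZOpp ea, env1)) end
  | (?a *~ ?k)%R =>
      let p := zreify a env in
      lazymatch p with (?ea, ?env1) => constr:((ZMulz ea k, env1)) end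
  | 0%R => constr:((ZZero, env))
  | _ =>
      match constr:(tt) with
      | _ => let n := zlookup t env in constr:((ZAt n, env))
      | _ => let env' := zappend env t in
             let n := zlookup t env' in constr:((ZAt n, env'))
      end
  end.

Ltac zs :=
  lazymatch goal with
  | |- @eq ?T ?l ?r =>
    let p := zreify l (@nil T) in
    lazymatch p with (?e1, ?env1) =>
      let q := zreify r env1 in
      lazymatch q with (?e2, ?env2) =>
        apply: (@zsolve _ env2 e1 e2); vm_compute; reflexivity
      end end
  end.

Ltac zs1 h := first [ apply: (@zcomb _ 1%R _ _ _ _ h); zs | apply: (@zcomb _ (-1)%R _ _ _ _ h); zs ].
Ltac zs2 h1 h2 := first [ apply: (@zcomb _ 1%R _ _ _ _ h1); zs1 h2 | apply: (@zcomb _ (-1)%R _ _ _ _ h1); zs1 h2 ].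
Ltac zs3 h1 h2 h3 := first [ apply: (@zcomb _ 1%R _ _ _ _ h1); zs2 h2 h3 | apply: (@zcomb _ (-1)%R _ _ _ _ h1); zs2 h2 h3 ].
Ltac zs4 h1 h2 h3 h4 := first [ apply: (@zcomb _ 1%R _ _ _ _ h1); zs3 h2 h3 h4 | apply: (@zcomb _ (-1)%R _ _ _ _ h1); zs3 h2 h3 h4 ].
Ltac zs5 h1 h2 h3 h4 h5 := first [ apply: (@zcomb _ 1%R _ _ _ _ h1); zs4 h2 h3 h4 h5 | apply: (@zcomb _ (-1)%R _ _ _ _ h1); zs4 h2 h3 h4 h5 ].




Ltac zs6 h1 h2 h3 h4 h5 h6 := first [ apply: (@zcomb _ 1%R _ _ _ _ h1); zs5 h2 h3 h4 h5 h6 | apply: (@zcomb _ (-1)%R _ _ _ _ h1); zs5 h2 h3 h4 h5 h6 ].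

Lemma linD (K : fieldType) (U W : lmodType K) (f : U -> W) : lin f -> forall x y, f (x + y) = f x + f y.
Proof. by move=> hf x y; have := hf 1 x y; rewrite !scale1r. Qed.
Lemma lin0 (K : fieldType) (U W : lmodType K) (f : U -> W) : lin f -> f 0 = 0.
Proof. move=> hf; have h := linD hf 0 0; rewrite addr0 in h; by apply: (addrI (f 0)); rewrite addr0 -h. Qed.
Lemma linZ (K : fieldType) (U W : lmodType K) (f : U -> W) : lin f -> forall a x, f (a *: x) = a *: f x.
Proof. by move=> hf a x; have := hf a x 0; rewrite !addr0 lin0 // addr0. Qed.
Lemma linN (K : fieldType) (U W : lmodType K) (f : U -> W) : lin f -> forall x, f (- x) = - f x.
Proof. by move=> hf x; rewrite -scaleN1r linZ // scaleN1r. Qed.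

Ltac pushsc := repeat progress rewrite ?scalerDr ?scalerN ?scaler0.

Lemma LTS_skew (K : fieldType) (L : lmodType K) (B : L -> L -> L -> L) :
  LieTripleSystem B -> forall x y z, B x y z = - B y x z.
Proof.
move=> [[h1 [h2 h3]] [h0 [hj hf]]] x y z.
have D1 := fun y z => linD (h1 y z); have D2 := fun x z => linD (h2 x z).
have := h0 (x + y) z; rewrite D1 /= !D2 /= h0 h0 => h.
apply/eqP; rewrite -subr_eq0 opprK; apply/eqP; zs1 h.
Qed.

Lemma LTS_DR (K : fieldType) (L : lmodType K) (B : L -> L -> L -> L) :
  LieTripleSystem B -> forall y c b, B y c b - B y b c = B b c y.
Proof.
move=> HB y c b; have sk := LTS_skew HB; move: HB => [_ [_ [hj _]]].
have h1 := hj y c b; have h2 := sk c b y; have h3 := sk b y c.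
zs3 h1 h2 h3.
Qed.

Lemma LTS_RL1 (K : fieldType) (L : lmodType K) (B : L -> L -> L -> L) :
  LieTripleSystem B -> forall x a b c d,
  B (B x a b) c d - B (B x a c) b d - B x a (B b c d) + (B (B x a d) c b - B (B x a d) b c) = 0.
Proof.
move=> HB x a b c d; have sk := LTS_skew HB; have DR := LTS_DR HB.
move: HB => [_ [_ [_ hf]]].
have h1 := DR (B x a d) c b; have h2 := hf x a b c d; have h3 := sk b (B x a c) d.
zs3 h1 h2 h3.
Qed.

Lemma LTS_RL2 (K : fieldType) (L : lmodType K) (B : L -> L -> L -> L) :
  LieTripleSystem B -> forall x a b c d,
  B x (B a b c) d + B x c (B a b d) =
  (B (B x c d) b a - B (B x c d) a b) - (B (B x b a) c d - B (B x a b) c d).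
Proof.
move=> HB x a b c d; have sk := LTS_skew HB; have DR := LTS_DR HB.
move: HB => [[h1 _] [_ [_ hf]]].
have D1 := fun y z => linD (h1 y z); have N1 := fun y z => linN (h1 y z).
have e1 := DR (B x c d) b a.
have e2 := congr1 (fun w => B w c d) (DR x b a); rewrite /= D1 /= N1 /= in e2.
have e3 := hf a b x c d.
zs3 e1 e2 e3.
Qed.

Definition BL (K : fieldType) (g V : lmodType K) (br : g -> g -> g -> g)
  (rho : g -> g -> V -> V) (X Y Z : (g * V)%type) : (g * V)%type :=
  (br X.1 Y.1 Z.1, Dop rho X.1 Y.1 Z.2 + rho Y.1 Z.1 X.2 - rho X.1 Z.1 Y.2).

Lemma pairE (K : fieldType) (g V : lmodType K) (X Y : (g * V)%type) : X.1 = Y.1 -> X.2 = Y.2 -> X = Y.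
Proof. by case: X Y => [? ?] [? ?] /= -> ->. Qed.
Lemma fstD (K : fieldType) (g V : lmodType K) (X Y : (g * V)%type) : (X + Y).1 = X.1 + Y.1. Proof. by []. Qed.
Lemma sndD (K : fieldType) (g V : lmodType K) (X Y : (g * V)%type) : (X + Y).2 = X.2 + Y.2. Proof. by []. Qed.
Lemma fstN (K : fieldType) (g V : lmodType K) (X : (g * V)%type) : (- X).1 = - X.1. Proof. by []. Qed.
Lemma sndN (K : fieldType) (g V : lmodType K) (X : (g * V)%type) : (- X).2 = - X.2. Proof. by []. Qed.
Lemma fstZ (K : fieldType) (g V : lmodType K) a (X : (g * V)%type) : (a *: X).1 = a *: X.1. Proof. by []. Qed.
Lemma sndZ (K : fieldType) (g V : lmodType K) a (X : (g * V)%type) : (a *: X).2 = a *: X.2. Proof. by []. Qed.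
Lemma fst0 (K : fieldType) (g V : lmodType K) : (0 : (g * V)%type).1 = 0. Proof. by []. Qed.
Lemma snd0 (K : fieldType) (g V : lmodType K) : (0 : (g * V)%type).2 = 0. Proof. by []. Qed.
Ltac prs := rewrite ?fstD ?sndD ?fstN ?sndN ?fstZ ?sndZ ?fst0 ?snd0 /=.

Lemma BL_LTS (K : fieldType) (g V : lmodType K) (br : g -> g -> g -> g)
  (rho : g -> g -> V -> V) :
  LieTripleSystem br -> LTSrep br rho -> LieTripleSystem (BL br rho).
Proof.
move=> [[b1 [b2 b3]] [b0 [bj bf]]] [r3 [r1 [r2 [A1 A2]]]].
have bD1 := fun y z => linD (b1 y z); have bN1 := fun y z => linN (b1 y z); have bZ1 := fun y z => linZ (b1 y z).
have bD2 := fun y z => linD (b2 y z); have bN2 := fun y z => linN (b2 y z); have bZ2 := fun y z => linZ (b2 y z).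
have bD3 := fun y z => linD (b3 y z); have bN3 := fun y z => linN (b3 y z); have bZ3 := fun y z => linZ (b3 y z).
have rD1 := fun y z => linD (r1 y z); have rN1 := fun y z => linN (r1 y z); have rZ1 := fun y z => linZ (r1 y z).
have rD2 := fun y z => linD (r2 y z); have rN2 := fun y z => linN (r2 y z); have rZ2 := fun y z => linZ (r2 y z).
have rD3 := fun y z => linD (r3 y z); have rN3 := fun y z => linN (r3 y z); have rZ3 := fun y z => linZ (r3 y z).
have r03 := fun y z => lin0 (r3 y z).
split; last split; last split.
- split; last split.
  + move=> [y v] [z w] a [x1 u1] [x2 u2]; apply: pairE; rewrite /BL /Dop /=; prs.
      by rewrite bD1 /= bZ1.
    rewrite /= ?rD1 /= ?rZ1 /= ?rD2 /= ?rZ2 /= ?rD3 /= ?rZ3 /= ?rN3 /=; pushsc; zs.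
  + move=> [y v] [z w] a [x1 u1] [x2 u2]; apply: pairE; rewrite /BL /Dop /=; prs.
      by rewrite bD2 /= bZ2.
    rewrite /= ?rD1 /= ?rZ1 /= ?rD2 /= ?rZ2 /= ?rD3 /= ?rZ3 /= ?rN3 /=; pushsc; zs.
  + move=> [y v] [z w] a [x1 u1] [x2 u2]; apply: pairE; rewrite /BL /Dop /=; prs.
      by rewrite bD3 /= bZ3.
    rewrite /= ?rD1 /= ?rZ1 /= ?rD2 /= ?rZ2 /= ?rD3 /= ?rZ3 /= ?rN3 /=; pushsc; zs.
- move=> [x u] [y v]; apply: pairE; rewrite /BL /Dop /=; prs; rewrite ?b0; zs.
- move=> [x u] [y v] [z w]; apply: pairE; rewrite /BL /Dop /=; prs; first by apply: bj.
  zs.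
- move=> [x1 u1] [x2 u2] [x3 u3] [x4 u4] [x5 u5]; apply: pairE; rewrite /BL /Dop /=; prs; first by apply: bf.
  rewrite !rD3 !rN3.
  have h1 := A2 x1 x2 x3 x4 u5; have h2 := A2 x1 x2 x4 x3 u5; have h3 := A2 x1 x2 x4 x5 u3.
  have h4 := A2 x1 x2 x3 x5 u4; have h5 := A1 x2 x3 x4 x5 u1; have h6 := A1 x1 x3 x4 x5 u2.
  rewrite /Dop ?rD3 ?rN3 in h1 h2 h3 h4 h5 h6.
  zs6 h1 h2 h3 h4 h5 h6.
Qed.

Definition iota (K : fieldType) (g V : lmodType K) (T : V -> g) (u : V) : (g * V)%type := (T u, u).
Definition jg (K : fieldType) (g V : lmodType K) (x : g) : (g * V)%type := (x, 0).
Definition pp (K : fieldType) (g V : lmodType K) (T : V -> g) (X : (g * V)%type) : g := X.1 - T X.2.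



Unset Implicit Arguments.
Theorem corollary5p15 (K : fieldType) (g V : lmodType K)
    (br : g -> g -> g -> g) (rho : g -> g -> V -> V) (T : V -> g) :
  [pchar K] =i pred0 ->
  LieTripleSystem br ->
  LTSrep br rho ->
  relRB br rho T ->
  LieTripleSystem (bracketT rho T) /\ LTSrep (bracketT rho T) (varrhoT br rho T).
Proof.
move=> _ Hbr Hrep [HT RB].
have HL := BL_LTS Hbr Hrep.
have [[L1 [L2 L3]] [L0 [LJ LF]]] := HL.
move: Hbr Hrep => [[b1 [b2 b3]] _] [r3 [r1 [r2 [A1 A2]]]].
have bD1 := fun y z => linD (b1 y z); have bN1 := fun y z => linN (b1 y z); have bZ1 := fun y z => linZ (b1 y z).
have bD2 := fun y z => linD (b2 y z); have bN2 := fun y z => linN (b2 y z); have bZ2 := fun y z => linZ (b2 y z).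
have bD3 := fun y z => linD (b3 y z); have bN3 := fun y z => linN (b3 y z); have bZ3 := fun y z => linZ (b3 y z).
have rD1 := fun y z => linD (r1 y z); have rN1 := fun y z => linN (r1 y z); have rZ1 := fun y z => linZ (r1 y z).
have rD2 := fun y z => linD (r2 y z); have rN2 := fun y z => linN (r2 y z); have rZ2 := fun y z => linZ (r2 y z).
have rD3 := fun y z => linD (r3 y z); have rN3 := fun y z => linN (r3 y z); have rZ3 := fun y z => linZ (r3 y z).
have r03 := fun y z => lin0 (r3 y z).
have TD := linD HT; have TN := linN HT; have TZ := linZ HT; have T0 := lin0 HT.
have iota_hom : forall u v w, BL br rho (iota T u) (iota T v) (iota T w) = iota T (bracketT rho T u v w).
  by move=> u v w; apply: pairE => //=; rewrite RB.
have iota_lin : forall a x y, iota T (a *: x + y) = a *: iota T x + iota T y.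
  by move=> a x y; apply: pairE => //=; rewrite HT.
have bTE : forall u v w, bracketT rho T u v w = (BL br rho (iota T u) (iota T v) (iota T w)).2 by [].
split.
  split; last split; last split.
  - split; last split.
    + move=> v w a x y /=; rewrite !bTE iota_lin L1; by [].
    + move=> v w a x y /=; rewrite !bTE iota_lin L2; by [].
    + move=> v w a x y /=; rewrite !bTE iota_lin L3; by [].
  - by move=> u v; rewrite bTE L0.
  - by move=> u v w; have := congr1 snd (LJ (iota T u) (iota T v) (iota T w)).
  - move=> u v w s t; have E := congr1 snd (LF (iota T u) (iota T v) (iota T w) (iota T s) (iota T t)).
    rewrite !iota_hom in E; exact E.
have vrE : forall u v x, varrhoT br rho T u v x = pp T (BL br rho (jg V x) (iota T u) (iota T v)).
  by move=> u v x; rewrite /varrhoT /pp /BL /= r03 addr0.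
have Kl : forall X u v, pp T (BL br rho X (iota T u) (iota T v)) = varrhoT br rho T u v (pp T X).
  move=> [y w] u v; rewrite /pp /varrhoT /BL /Dop /=; repeat progress (rewrite ?TD ?TN ?TZ ?T0 ?bD1 ?bN1 ?bZ1 ?bD2 ?bN2 ?bZ2 ?bD3 ?bN3 ?bZ3 ?rD1 ?rN1 ?rZ1 ?rD2 ?rN2 ?rZ2 ?rD3 ?rN3 ?rZ3 ?r03 /=).
  have h := RB w u v; rewrite /Dop ?TD ?TN in h; repeat progress (rewrite ?TD ?TN ?TZ ?T0 ?bD1 ?bN1 ?bZ1 ?bD2 ?bN2 ?bZ2 ?bD3 ?bN3 ?bZ3 ?rD1 ?rN1 ?rZ1 ?rD2 ?rN2 ?rZ2 ?rD3 ?rN3 ?rZ3 ?r03 /=); zs1 h.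
have ppD : forall X Y, pp T (X + Y) = pp T X + pp T Y.
  by move=> X Y; rewrite /pp; prs; rewrite TD; zs.
have ppN : forall X, pp T (- X) = - pp T X.
  by move=> X; rewrite /pp; prs; rewrite TN; zs.
have pp0 : pp T 0 = 0 by rewrite /pp; prs; rewrite T0 subr0.
have ppj : forall x, pp T (jg V x) = x by move=> x; rewrite /pp /= T0 subr0.
have vl1 : forall a b, lin (varrhoT br rho T a b).
  by move=> u v c x y; rewrite /varrhoT /Dop; repeat progress (rewrite ?TD ?TN ?TZ ?T0 ?bD1 ?bN1 ?bZ1 ?bD2 ?bN2 ?bZ2 ?bD3 ?bN3 ?bZ3 ?rD1 ?rN1 ?rZ1 ?rD2 ?rN2 ?rZ2 ?rD3 ?rN3 ?rZ3 ?r03 /=); pushsc; zs.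
have vD := fun a b => linD (vl1 a b); have vN := fun a b => linN (vl1 a b).
split; last split; last split; last split.
- exact: vl1.
- by move=> v x c u u'; rewrite /varrhoT /Dop; repeat progress (rewrite ?TD ?TN ?TZ ?T0 ?bD1 ?bN1 ?bZ1 ?bD2 ?bN2 ?bZ2 ?bD3 ?bN3 ?bZ3 ?rD1 ?rN1 ?rZ1 ?rD2 ?rN2 ?rZ2 ?rD3 ?rN3 ?rZ3 ?r03 /=); pushsc; zs.
- by move=> u x c v v'; rewrite /varrhoT /Dop; repeat progress (rewrite ?TD ?TN ?TZ ?T0 ?bD1 ?bN1 ?bZ1 ?bD2 ?bN2 ?bZ2 ?bD3 ?bN3 ?bZ3 ?rD1 ?rN1 ?rZ1 ?rD2 ?rN2 ?rZ2 ?rD3 ?rN3 ?rZ3 ?r03 /=); pushsc; zs.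
- move=> a b c d w.
  have E := congr1 (pp T) (LTS_RL1 HL (jg V w) (iota T a) (iota T b) (iota T c) (iota T d)).
  (repeat progress rewrite ?ppD ?ppN ?pp0 in E); rewrite !iota_hom !Kl !ppj in E.
  rewrite /Dop; zs1 E.
- move=> a b c d w.
  have E := congr1 (pp T) (LTS_RL2 HL (jg V w) (iota T a) (iota T b) (iota T c) (iota T d)).
  (repeat progress rewrite ?ppD ?ppN ?pp0 in E); rewrite !iota_hom !Kl !ppj in E.
  rewrite /Dop vD vN; zs1 E.
Qed.
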